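(* Let $(\mathcal X,d)$ be a metric space with $d(x,y)\le1$ for all $x,y\in\mathcal X$, let $f:[n]\to\mathcal X$ be a feature, $1\le k\le n$, and $\mu=\mathbb E_{S\sim\mathcal U_{k,n}}[W(\phi_f^{[n]},\phi_f^S)]$. Then for every $t>0$, $$\mathbb P_{S\sim\mathcal U_{k,n}}\big[W(\phi_f^{[n]},\phi_f^S)\ge\mu+t\big]\le\exp(-t^2k/4).$$
   Context: For nonempty $S\subseteq[n]$, $\phi_f^S=\frac1{|S|}\sum_{i\in S}\delta(f(i))$, with $\delta(\cdot)$ a Dirac mass. $W(\phi,\psi)=\min_{\gamma}\mathbb E_{(x,y)\sim\gamma}[d(x,y)]$ over couplings $\gamma$ of the finitely supported distributions $\phi,\psi$ (Wasserstein-1 distance). $\mathcal U_{k,n}$ is the uniform distribution over size-$k$ subsets of $[n]$. *)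

(* Defs.v *)
From HB Require Import structures.
From mathcomp Require Import all_boot all_order all_algebra.
From mathcomp Require Import all_classical all_reals.
From mathcomp Require Import topology normedtype sequences exp.
Set Implicit Arguments. Unset Strict Implicit. Unset Printing Implicit Defensive.
Import Order.TTheory GRing.Theory Num.Theory.
Local Open Scope classical_set_scope.
Local Open Scope ring_scope.

Section Defs.
Variables (R : realType) (X : eqType).

(* phi_f^S = (1/|S|) sum_{i in S} delta(f i), as a finitely supported
   mass function X -> R. *)
Definition phi (n : nat) (f : 'I_n -> X) (S : {set 'I_n}) : X -> R :=
  fun x => #|[set i in S | f i == x]|%:R / #|S|%:R.

Definition is_coupling (phi psi : X -> R) (s : seq X) (g : X -> X -> R) : Prop :=
  [/\ uniq s,
      (forall x y, 0 <= g x y),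
      (forall x y, g x y != 0 -> x \in s /\ y \in s),
      (forall x, \sum_(y <- s) g x y = phi x) &
      (forall y, \sum_(x <- s) g x y = psi y)].

Definition coupling_cost (d : X -> X -> R) (s : seq X) (g : X -> X -> R) : R :=
  \sum_(x <- s) \sum_(y <- s) g x y * d x y.

(* Wasserstein-1 distance: optimum over all couplings (the min is attained
   for finitely supported measures, so inf = min). *)
Definition W1 (d : X -> X -> R) (phi psi : X -> R) : R :=
  inf [set c | exists s g, is_coupling phi psi s g /\ c = coupling_cost d s g].
End Defs.

Section Unif.
Variable (R : realType).
Definition ksubsets (n k : nat) : {set {set 'I_n}} := [set S : {set 'I_n} | #|S| == k].

Definition unifE (n k : nat) (F : {set 'I_n} -> R) : R :=
  (\sum_(S in ksubsets n k) F S) / #|ksubsets n k|%:R.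

Definition unifP (n k : nat) (P : pred {set 'I_n}) : R :=
  #|[set S in ksubsets n k | P S]|%:R / #|ksubsets n k|%:R.
End Unif.
Arguments unifE {R} n k F.
Arguments unifP {R} n k P.
Arguments phi {R X} n f S.

(* Main.v *)
Require Import Defs.
From HB Require Import structures.
From mathcomp Require Import all_boot all_order all_algebra.
From mathcomp Require Import all_classical all_reals.
From mathcomp Require Import topology normedtype sequences exp.
From mathcomp Require Import ring lra.
Import Order.TTheory GRing.Theory Num.Theory.
Local Open Scope ring_scope.
Section Exp.
Variable R : realType.
Lemma poly_ineq (y : R) : -(1/8) <= y <= 1/8 ->
  1 <= (1 - y) ^+ 4 * (1 + 4 * y + 16 * y ^+ 2).
Proof.
move=> /andP[h1 h2].
have e : (1 - y) ^+ 4 * (1 + 4 * y + 16 * y ^+ 2) =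
   1 + y^+2 * (6 - 44 * y + 81 * y^+2 - 60 * y^+3 + 16 * y^+4) by ring.
rewrite e lerDl; apply: mulr_ge0; first by rewrite sqr_ge0.
have hy2 : y ^+ 2 <= 1/64 by rewrite expr2; nra.
have hy3 : `|y ^+ 3| <= 1/512.
  rewrite normrX; have : `|y| <= 1/8 by rewrite ler_norml h1 h2.
  move=> h; have h0 : 0 <= `|y| by [].
  rewrite !exprS expr0 mulr1; nra.
have hy4 : 0 <= y ^+ 4 by rewrite (_ : 4 = 2 * 2)%N // exprM sqr_ge0.
move: hy3; rewrite ler_norml => /andP[a b]; nra.
Qed.

Lemma expR_le_quad (x : R) : `|x| <= 1/2 -> expR x <= 1 + x + x ^+ 2.
Proof.
move=> hx; move: hx; rewrite ler_norml => /andP[h1 h2].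
set y := x / 4.
have hy : -(1/8) <= y <= 1/8 by apply/andP; split; rewrite /y; lra.
have ey : expR x = expR y ^+ 4 by rewrite -expRM_natl /y; congr expR; field.
have py : 0 < 1 - y by rewrite /y; lra.
have b1 : expR y <= (1 - y)^-1.
  have h := expR_ge1Dx (- y); rewrite expRN in h.
  rewrite -(invrK (expR y)) lef_pV2 ?posrE ?invr_gt0 ?expR_gt0 //.
rewrite ey; apply: (le_trans (lerXn2r 4 _ _ b1)).
- by rewrite nnegrE expR_ge0.
- by rewrite nnegrE invr_ge0 ltW.
have h := poly_ineq y hy.
have -> : 1 + x + x ^+ 2 = 1 + 4 * y + 16 * y ^+ 2 by rewrite /y; field.
rewrite exprVn -[(_ ^+ 4)^-1]mul1r ler_pdivrMr ?exprn_gt0 //.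
by rewrite mulrC.
Qed.
End Exp.

Section Avg.
Variables (R : realType) (I : finType).
Definition avg (P : {set I}) (F : I -> R) := (\sum_(i in P) F i) / #|P|%:R.

Lemma avg_le (P : {set I}) F G : (forall i, i \in P -> F i <= G i) -> avg P F <= avg P G.
Proof. by move=> h; rewrite /avg ler_wpM2r ?invr_ge0 ?ler0n // ler_sum. Qed.

Lemma avgZl (P : {set I}) c F : avg P (fun i => c * F i) = c * avg P F.
Proof. by rewrite /avg -big_distrr mulrA. Qed.

Lemma avgZr (P : {set I}) c F : avg P (fun i => F i * c) = avg P F * c.
Proof. by rewrite /avg -big_distrl mulrAC. Qed.

Lemma avgD (P : {set I}) F G : avg P (fun i => F i + G i) = avg P F + avg P G.
Proof. by rewrite /avg big_split mulrDl. Qed.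

Lemma avgN (P : {set I}) F : avg P (fun i => - F i) = - avg P F.
Proof. by rewrite /avg sumrN mulNr. Qed.

Lemma avg_cst (P : {set I}) c : P != finset.set0 -> avg P (fun _ => c) = c.
Proof.
move=> hP; rewrite /avg sumr_const -[c *+ _]mulr_natr mulfK // pnatr_eq0 -lt0n.
by rewrite card_gt0.
Qed.

Lemma avgB (P : {set I}) F G : avg P (fun i => F i - G i) = avg P F - avg P G.
Proof. by rewrite avgD avgN. Qed.
Lemma avg_norm (P : {set I}) F : `|avg P F| <= avg P (fun i => `|F i|).
Proof.
rewrite /avg normrM normfV normr_nat.
by rewrite ler_wpM2r ?invr_ge0 ?ler0n // ler_norm_sum.
Qed.

Lemma avg_cst_le (P : {set I}) c : 0 <= c -> avg P (fun _ => c) <= c.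
Proof.
move=> c0; case: (eqVneq P finset.set0) => [->|hP]; last by rewrite avg_cst.
by rewrite /avg big_set0 mul0r.
Qed.
Lemma one_step (U : {set I}) g c lam : U != finset.set0 -> 0 <= lam -> lam * c <= 1/2 ->
  (forall a a', a \in U -> a' \in U -> `|g a - g a'| <= c) ->
  avg U (fun a => expR (lam * (g a - avg U g))) <= expR (lam ^+ 2 * c ^+ 2).
Proof.
move=> hU l0 lc hg.
have [a0 a0U] := set0Pn _ hU.
have c0 : 0 <= c by have := hg a0 a0 a0U a0U; rewrite subrr normr0.
set m := avg U g.
have hd : forall a, a \in U -> `|g a - m| <= c.
  move=> a aU.
  have -> : g a - m = avg U (fun a' => g a - g a') by rewrite avgB avg_cst.
  apply: le_trans (avg_norm _ _) _.
  apply: (le_trans _ (avg_cst_le _ c c0)); apply: avg_le => a' a'U; exact: hg.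
have hx : forall a, a \in U -> `|lam * (g a - m)| <= lam * c.
  by move=> a aU; rewrite normrM (ger0_norm l0) ler_wpM2l // hd.
apply: (le_trans (avg_le U _ (fun a => 1 + lam * (g a - m) + (lam * (g a - m)) ^+ 2) _)).
  move=> a aU; apply: expR_le_quad; apply: le_trans (hx a aU) lc.
rewrite avgD avgD avg_cst // avgZl avgB avg_cst // subrr mulr0 addr0.
have hs : avg U (fun a => (lam * (g a - m)) ^+ 2) <= (lam * c) ^+ 2.
  apply: (le_trans _ (avg_cst_le _ _ (sqr_ge0 (lam * c)))); apply: avg_le => a aU.
  have := hx a aU; rewrite ler_norml => /andP[h1 h2].
  rewrite !expr2; nra.
apply: le_trans (expR_ge1Dx _); rewrite -exprMn lerD2l //.
Qed.
End Avg.
Arguments one_step {R I U}.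
Arguments avg {R I} P F.
Arguments avg_le {R I}.
Arguments avgZl {R I}.
Arguments avgZr {R I}.
Arguments avgD {R I}.
Arguments avgN {R I}.
Arguments avg_cst {R I}.
Arguments avgB {R I}.
Arguments avg_norm {R I}.
Arguments avg_cst_le {R I}.

Section Comb.
Variables (R : realType) (T : finType).

Definition sub j (U : {set T}) := [set A : {set T} | A \subset U & #|A| == j].

Definition swe (x y i : T) := if i == x then y else if i == y then x else i.
Lemma sweK x y : involutive (swe x y).
Proof.
move=> i; rewrite /swe.
case: (eqVneq i x) => [->|hix].
  rewrite eqxx; case: (eqVneq y x) => [->|hyx] //; by rewrite ?eqxx.
case: (eqVneq i y) => [->|hiy]; first by rewrite ?eqxx.
by rewrite ?(negPf hix) ?(negPf hiy).
Qed.
Definition sw x y (A : {set T}) := [set swe x y i | i in A].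
Lemma swK x y : involutive (sw x y).
Proof.
move=> A; rewrite /sw -imset_comp.
rewrite (eq_imset _ (sweK x y)) imset_id //.
Qed.

Lemma double_count j (U : {set T}) (h : {set T} -> R) :
  \sum_(a in U) \sum_(B in sub j (U :\ a)) h (a |: B)
  = (j.+1)%:R * \sum_(A in sub j.+1 U) h A.
Proof.
have inner : forall a, a \in U -> \sum_(B in sub j (U :\ a)) h (a |: B)
   = \sum_(A in sub j.+1 U) (a \in A)%:R * h A.
  move=> a aU.
  transitivity (\sum_(A in sub j.+1 U | a \in A) h A); last first.
    rewrite big_mkcondr; apply: eq_bigr => A _.
    by case: (a \in A); rewrite ?mul1r ?mul0r.
  symmetry.
  rewrite (reindex_onto (fun B => a |: B) (fun A => A :\ a)) /=; last first.
    by move=> A /andP[_ aA]; rewrite finset.setD1K.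
  apply: eq_bigl => B.
  rewrite setU11 andbT /sub !finset.inE.
  apply/idP/idP.
  - move=> /andP[/andP[sBU cB] /eqP hB].
    have aB : a \notin B by rewrite -hB !finset.inE eqxx.
    rewrite (cardsU1 a B) aB /= in cB.
    apply/andP; split; last by rewrite add1n eqSS in cB.
    apply/fintype.subsetP => i iB; rewrite !finset.inE.
    have: i \in a |: B by rewrite !finset.inE iB orbT.
    move/(fintype.subsetP sBU) => ->; rewrite andbT.
    by apply/eqP => eia; rewrite -eia iB in aB.
  - move=> /andP[sB cB].
    have aB : a \notin B by apply/negP => /(fintype.subsetP sB); rewrite !finset.inE eqxx.
    rewrite cardsU1 aB /= add1n eqSS cB andbT.
    apply/andP; split.
      apply/fintype.subsetP => i; rewrite !finset.inE => /orP[/eqP->//|iB].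
      by move: (fintype.subsetP sB i iB); rewrite !finset.inE => /andP[].
    apply/eqP/setP => i; rewrite !finset.inE.
    case: (eqVneq i a) => [->|] /=; first by rewrite (negPf aB).
    by [].
rewrite (eq_bigr _ inner) exchange_big /= big_distrr /=.
apply: eq_bigr => A; rewrite finset.inE => /andP[sAU /eqP cA].
rewrite -big_distrl /=; congr (_ * _).
have -> : \sum_(i in U) (i \in A)%:R = \sum_(i in U | i \in A) 1 :> R.
  by rewrite big_mkcondr; apply: eq_bigr => i _; case: (i \in A).
rewrite (eq_bigl (fun i => i \in A)) ?sumr_const ?cA //.
by move=> i /=; apply/idP/idP => [/andP[]//|iA]; rewrite iA (fintype.subsetP sAU).
Qed.

Lemma cards_sub j (U : {set T}) : #|sub j U| = 'C(#|U|, j).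
Proof. exact: cards_draws. Qed.

Lemma cards_subD1 j (U : {set T}) a : a \in U -> #|sub j (U :\ a)| = 'C(#|U|.-1, j).
Proof. by move=> aU; rewrite cards_sub [in RHS](cardsD1 a U) aU. Qed.

Lemma Av_decomp j (U : {set T}) (F : {set T} -> R) : (j < #|U|)%N ->
  avg (sub j.+1 U) F = avg U (fun a => avg (sub j (U :\ a)) (fun B => F (a |: B))).
Proof.
move=> jU; rewrite /avg.
rewrite (eq_bigr (fun a => (\sum_(B in sub j (U :\ a)) F (a |: B)) / ('C(#|U|.-1, j))%:R)); last first.
  by move=> a aU; rewrite cards_subD1.
rewrite -big_distrl /= double_count cards_sub.
have H : (#|U|%:R * ('C(#|U|.-1, j))%:R = (j.+1)%:R * ('C(#|U|, j.+1))%:R :> R).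
  by rewrite -!natrM mul_bin_diag.
have NC : ('C(#|U|, j.+1))%:R != 0 :> R by rewrite pnatr_eq0 -lt0n bin_gt0.
have NN : ('C(#|U|.-1, j))%:R != 0 :> R.
  by rewrite pnatr_eq0 -lt0n bin_gt0 -ltnS prednK // (leq_ltn_trans _ jU).
have HU : #|U|%:R = (j.+1)%:R * ('C(#|U|, j.+1))%:R / ('C(#|U|.-1, j))%:R :> R.
  by rewrite -H mulfK.
rewrite HU; field.
by rewrite NN NC /= addrC natr1 pnatr_eq0.
Qed.

Lemma sweC x y : swe x y =1 swe y x.
Proof.
move=> i; rewrite /swe.
case: ifP => hx; case: ifP => hy //.
- by rewrite -(eqP hy); exact: (eqP hx).
Qed.

Lemma swC x y B : sw x y B = sw y x B.
Proof. by apply: eq_imset; apply: sweC. Qed.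

Lemma subU1 j (U : {set T}) a B : a \in U -> B \in sub j (U :\ a) -> a |: B \in sub j.+1 U.
Proof.
move=> aU; rewrite !finset.inE => /andP[sB cB].
have aB : a \notin B by apply/negP => /(fintype.subsetP sB); rewrite !finset.inE eqxx.
rewrite cardsU1 aB /= add1n eqSS cB andbT.
apply/fintype.subsetP => i; rewrite !finset.inE => /orP[/eqP->//|iB].
by move: (fintype.subsetP sB i iB); rewrite !finset.inE => /andP[].
Qed.

Lemma sw_sub j (U : {set T}) a a' B : a \in U -> a' \in U ->
  B \in sub j (U :\ a) -> sw a a' B \in sub j (U :\ a').
Proof.
move=> aU a'U; rewrite !finset.inE => /andP[sB cB].
rewrite card_imset; last exact: (inv_inj (sweK a a')).
rewrite cB andbT.
apply/fintype.subsetP => z /imsetP[i iB ->].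
move: (fintype.subsetP sB i iB); rewrite !finset.inE => /andP[hia iU].
rewrite /swe (negPf hia).
case: (eqVneq i a') => [eia|hia'].
  by rewrite aU andbT; apply/eqP => e; move: hia; rewrite eia -e eqxx.
by rewrite hia' iU.
Qed.

Lemma sw_U1 a a' B : sw a a' (a |: B) = a' |: sw a a' B.
Proof. by rewrite /sw imsetU1 /swe eqxx. Qed.

Definition BD (G : {set T} -> R) j (U : {set T}) c := forall A x y,
  A \in sub j U -> x \in U -> y \in U -> `|G A - G (sw x y A)| <= c.

Lemma g_close j (U : {set T}) G c a a' : a \in U -> a' \in U -> BD G j.+1 U c -> 0 <= c ->
  `|avg (sub j (U :\ a)) (fun B => G (a |: B)) - avg (sub j (U :\ a')) (fun B => G (a' |: B))| <= c.
Proof.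
move=> aU a'U hBD c0.
have e : \sum_(B in sub j (U :\ a')) G (a' |: B) = \sum_(B in sub j (U :\ a)) G (sw a a' (a |: B)).
  rewrite (reindex_inj (inv_inj (swK a a'))) /=.
  apply: eq_big => B; last by move=> _; rewrite sw_U1.
  apply/idP/idP => h; last exact: sw_sub.
  by rewrite -(swK a a' B) swC; apply: sw_sub.
have ec : #|sub j (U :\ a')| = #|sub j (U :\ a)| by rewrite !cards_subD1.
have -> : avg (sub j (U :\ a')) (fun B => G (a' |: B)) = avg (sub j (U :\ a)) (fun B => G (sw a a' (a |: B))).
  by rewrite /avg e ec.
rewrite -(avgB (sub j (U :\ a)) (fun B => G (a |: B)) (fun B => G (sw a a' (a |: B)))).
apply: le_trans (avg_norm _ _) _.
apply: (le_trans _ (avg_cst_le _ c c0)); apply: avg_le => B hB.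
by apply: hBD => //; apply: subU1.
Qed.

Lemma sub0 (U : {set T}) : sub 0 U = [set finset.set0].
Proof.
apply/setP => A; rewrite !finset.inE cards_eq0.
by case: (eqVneq A finset.set0) => [->|_]; rewrite ?andbT ?andbF // finset.sub0set.
Qed.

Lemma subD1 j (U : {set T}) A a : A \in sub j.+1 U -> a \in A -> A :\ a \in sub j (U :\ a).
Proof.
rewrite !finset.inE => /andP[sA cA] aA.
rewrite (cardsD1 a A) aA add1n eqSS in cA; rewrite cA andbT.
apply/fintype.subsetP => i; rewrite !finset.inE => /andP[-> iA] /=.
exact: (fintype.subsetP sA).
Qed.

Lemma BD_sub j (U : {set T}) G c a : a \in U -> BD G j.+1 U c ->
  BD (fun B => G (a |: B)) j (U :\ a) c.
Proof.
move=> aU hBD B x y hB; rewrite !finset.inE => /andP[xa xU] /andP[ya yU].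
have e : sw x y (a |: B) = a |: sw x y B.
  rewrite /sw imsetU1; congr (_ |: _).
  by rewrite /swe eq_sym (negPf xa) eq_sym (negPf ya).
rewrite /= -e.
by apply: hBD => //; apply: subU1.
Qed.

Lemma conc j : forall (U : {set T}) G c lam, (j <= #|U|)%N -> 0 <= c -> 0 <= lam ->
  lam * c <= 1/2 -> BD G j U c ->
  (forall A, A \in sub j U -> G A - avg (sub j U) G <= j%:R * c) /\
  avg (sub j U) (fun A => expR (lam * (G A - avg (sub j U) G))) <= expR (j%:R * (lam ^+ 2 * c ^+ 2)).
Proof.
elim: j => [|j IH] U G c lam jU c0 l0 lc hBD.
  have av : forall F : {set T} -> R, avg (sub 0 U) F = F finset.set0.
    by move=> F; rewrite sub0 /avg big_set1 cards1 divr1.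
  rewrite !av; split.
    by move=> A; rewrite sub0 finset.in_set1 => /eqP ->; rewrite subrr /= mul0r.
  by rewrite subrr mulr0 /= mul0r.
have Une : U != finset.set0 by rewrite -card_gt0 (leq_trans _ jU).
set ga := fun a => avg (sub j (U :\ a)) (fun B => G (a |: B)).
have hm : avg (sub j.+1 U) G = avg U ga by rewrite Av_decomp.
have hga : forall a a', a \in U -> a' \in U -> `|ga a - ga a'| <= c.
  by move=> a a' aU a'U; apply: g_close.
have hIH : forall a, a \in U ->
  (forall B, B \in sub j (U :\ a) -> G (a |: B) - ga a <= j%:R * c) /\
  avg (sub j (U :\ a)) (fun B => expR (lam * (G (a |: B) - ga a)))
     <= expR (j%:R * (lam ^+ 2 * c ^+ 2)).
  move=> a aU; apply: IH => //; last exact: BD_sub.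
  by rewrite -ltnS (cardsD1 a U) aU add1n in jU.
rewrite hm; split.
  move=> A hA.
  have Ane : A != finset.set0.
    by move: hA; rewrite finset.inE => /andP[_ /eqP cA]; rewrite -card_gt0 cA.
  have [a aA] := set0Pn _ Ane.
  have aU : a \in U.
    by move: hA; rewrite finset.inE => /andP[sA _]; apply: (fintype.subsetP sA).
  have eA : A = a |: (A :\ a) by rewrite finset.setD1K.
  have hB : A :\ a \in sub j (U :\ a) by apply: subD1.
  have h1 := (hIH a aU).1 _ hB; rewrite -eA in h1.
  have h2 : ga a - avg U ga <= c.
    have -> : ga a - avg U ga = avg U (fun a' => ga a - ga a') by rewrite avgB avg_cst.
    apply: (le_trans _ (avg_cst_le _ c c0)); apply: avg_le => a' a'U.
    exact: le_trans (ler_norm _) (hga a a' aU a'U).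
  have -> : G A - avg U ga = (G A - ga a) + (ga a - avg U ga) by rewrite addrA subrK.
  by rewrite -natr1 mulrDl mul1r lerD.
rewrite Av_decomp //.
set m := avg U ga.
apply: (le_trans (avg_le U _ (fun a => expR (j%:R * (lam ^+ 2 * c ^+ 2)) * expR (lam * (ga a - m))) _)).
  move=> a aU.
  have -> : avg (sub j (U :\ a)) (fun B => expR (lam * (G (a |: B) - m))) =
     avg (sub j (U :\ a)) (fun B => expR (lam * (G (a |: B) - ga a))) * expR (lam * (ga a - m)).
    rewrite -avgZr; congr avg; apply: funext => B.
    by rewrite -expRD; congr expR; ring.
  by rewrite ler_wpM2r ?expR_ge0 // (hIH a aU).2.
rewrite avgZl.
apply: le_trans (ler_wpM2l (expR_ge0 _) (one_step ga c lam Une l0 lc hga)) _.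
by rewrite -expRD -natr1 mulrDl mul1r.
Qed.
End Comb.
Arguments swe {T}.
Arguments sw {T}.
Arguments sweK {T}.
Arguments swK {T}.
Arguments sweC {T}.
Arguments swC {T}.
Arguments sub {T}.
Arguments BD {R T}.

Section SwSets.
Variable T : finType.
Lemma mem_sw x y (A : {set T}) z : (z \in sw x y A) = (swe x y z \in A).
Proof.
by rewrite -{1}(sweK x y z) /sw mem_imset //; apply: (inv_inj (sweK x y)).
Qed.

Lemma sw_in_out u v (A : {set T}) : u \in A -> v \notin A -> sw u v A = v |: (A :\ u).
Proof.
move=> uA vA; apply/setP => z; rewrite mem_sw !finset.inE /swe.
have uv : u != v by apply/eqP => e; move: vA; rewrite -e uA.
case: (eqVneq z u) => [->|zu] /=; first by rewrite (negPf vA) (negPf uv).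
case: (eqVneq z v) => [->|zv] //=.
Qed.

Lemma sw_same x y (A : {set T}) : (x \in A) = (y \in A) -> sw x y A = A.
Proof.
move=> exy; apply/setP => z; rewrite mem_sw /swe.
case: (eqVneq z x) => [->|zx] /=; first by rewrite exy.
case: (eqVneq z y) => [->|zy] //=.
Qed.
End SwSets.

Section WS.
Variables (R : realType) (X : eqType).

Lemma sum_pred1 (s : seq X) z (F : X -> R) : uniq s -> z \in s ->
  \sum_(q <- s) (q == z)%:R * F q = F z.
Proof.
elim: s => [//|a s IH] /= /andP[aS us]; rewrite in_cons big_cons.
case: (eqVneq a z) => [eaz|az] /=.
  move=> _; rewrite -eaz ?eqxx mul1r big1_seq ?addr0 // => q /andP[_ qs].
  case: (eqVneq q a) => [e|]; last by rewrite mul0r.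
  by move: aS; rewrite -e qs.
by move=> zs; rewrite mul0r add0r IH.
Qed.

Lemma sum_ext_s (s : seq X) p1 (h : X -> R) : (forall p, h p != 0 -> p \in s) ->
  \sum_(p <- (if p1 \in s then s else p1 :: s)) h p = \sum_(p <- s) h p.
Proof.
move=> hs; case: ifP => // p1s; rewrite big_cons.
have -> : h p1 = 0 by apply/eqP; apply: contraFT p1s => /hs.
by rewrite add0r.
Qed.

Lemma card_sum n (f : 'I_n -> X) (S : {set 'I_n}) q :
  (#|[set i in S | f i == q]|%:R : R) = \sum_(i in S) (f i == q)%:R.
Proof.
rewrite -sum1dep_card natr_sum [RHS]big_mkcond /=.
rewrite [LHS]big_mkcond /=; apply: eq_bigr => i _.
by case: (i \in S); case: (f i == q).
Qed.

Lemma phi_swap n (f : 'I_n -> X) (S : {set 'I_n}) x y q : x \in S -> y \notin S ->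
  (phi n f (y |: (S :\ x)) q : R) =
  phi n f S q + ((f y == q)%:R - (f x == q)%:R) / #|S|%:R.
Proof.
move=> xS yS.
have yS' : y \notin S :\ x by rewrite finset.inE (negPf yS) andbF.
rewrite /phi !card_sum cardsU1 yS' [#|S|](cardsD1 x S) xS /=.
rewrite big_setU1 //= (big_setD1 _ xS) /=.
by rewrite add1n; ring.
Qed.

Variables (d : X -> X -> R)
  (d_ge0 : forall x y, 0 <= d x y)
  (d_tri : forall x y z, d x z <= d x y + d y z)
  (d_le1 : forall x y, d x y <= 1).

Lemma W1_step_coupling n (f : 'I_n -> X) (S : {set 'I_n}) x y (mu : X -> R) s g :
  x \in S -> y \notin S -> is_coupling mu (phi n f S) s g ->
  exists s' g', is_coupling mu (phi n f (y |: (S :\ x))) s' g' /\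
    coupling_cost d s' g' <= coupling_cost d s g + #|S|%:R^-1.
Proof.
move=> xS yS [us g0 gsupp grow gcol].
set p0 := f x; set p1 := f y; set k := (#|S|%:R : R).
set C0 := (#|[set i in S | f i == p0]|%:R : R).
have C0ge1 : 1 <= C0.
  by rewrite /C0 ler1n; apply/card_gt0P; exists x; rewrite finset.inE xS eqxx.
have k0 : 0 < k by rewrite /k ltr0n; apply/card_gt0P; exists x.
have p0s : p0 \in s.
  apply: contraT => p0ns.
  have : \sum_(p <- s) g p p0 = 0.
    rewrite big1_seq // => p /andP[_ ps]; apply/eqP; apply: contraT => h.
    by have [_ ] := gsupp p p0 h; rewrite (negPf p0ns).
  rewrite gcol /phi -/C0 -/k => /eqP; rewrite mulf_eq0 invr_eq0 => /orP[|]/eqP h.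
    by move: C0ge1; rewrite h ler10.
  by move: k0; rewrite h ltxx.
set r := fun p => g p p0 / C0.
have r0 : forall p, 0 <= r p by move=> p; rewrite /r divr_ge0 // (le_trans ler01 C0ge1).
have rs : forall p, r p != 0 -> p \in s.
  move=> p; rewrite /r mulf_eq0 negb_or => /andP[h _].
  by have [] := gsupp p p0 h.
set s' := if p1 \in s then s else p1 :: s.
have ss' : {subset s <= s'} by move=> z zs; rewrite /s'; case: ifP => // _; rewrite in_cons zs orbT.
have p1s' : p1 \in s' by rewrite /s'; case: ifP => // _; rewrite in_cons eqxx.
have p0s' : p0 \in s' by apply: ss'.
have us' : uniq s' by rewrite /s'; case: ifP => //= ->.
have rsum : \sum_(p <- s') r p = k^-1.
  rewrite sum_ext_s; last by move=> p /rs.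
  rewrite /r -big_distrl /= gcol /phi -/C0 -/k.
  by rewrite mulrAC divff ?mul1r // lt0r_neq0 // (lt_le_trans ltr01 C0ge1).
set g' := fun p q => g p q - (q == p0)%:R * r p + (q == p1)%:R * r p.
have inner : forall p, \sum_(q <- s') g' p q * d p q =
    \sum_(q <- s) g p q * d p q - r p * d p p0 + r p * d p p1.
  move=> p; rewrite /g'.
  under eq_bigr do rewrite mulrDl mulrBl -!mulrA.
  rewrite big_split /= sumrB !sum_pred1 // sum_ext_s; first by rewrite /r !mulrA.
  move=> q; rewrite mulf_eq0 negb_or => /andP[h _].
  by have [] := gsupp p q h.
exists s', g'; split; first split.
- exact: us'.
- move=> p q; rewrite /g'.
  case: (eqVneq q p0) => [->|qp0].
    case: (eqVneq p0 p1) => [e|_]; first by rewrite subrK.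
    rewrite mul0r addr0 mul1r subr_ge0 /r ler_pdivrMr ?(lt_le_trans ltr01 C0ge1) //.
    by have := g0 p p0; nra.
  by rewrite mul0r subr0 addr_ge0 // mulr_ge0.
- move=> p q; rewrite /g'.
  case: (eqVneq (g p q) 0) => [gz|gnz]; last first.
    by move=> _; have [h1 h2] := gsupp p q gnz; split; apply: ss'.
  case: (eqVneq (r p) 0) => [rz|rnz]; first by rewrite gz rz !mulr0 subr0 addr0 eqxx.
  move=> h; split; first by apply/ss'/rs.
  move: h; case: (eqVneq q p0) => [->//|qp0]; case: (eqVneq q p1) => [->//|qp1].
  by rewrite gz !mul0r subr0 addr0 eqxx.
- move=> p; rewrite /g' big_split /= sumrB.
  rewrite sum_ext_s; last first.
    by move=> q h; have [] := gsupp p q h.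
  rewrite (sum_pred1 s' p0 (fun _ => r p)) // (sum_pred1 s' p1 (fun _ => r p)) //.
  by rewrite grow subrK.
- move=> q; rewrite /g' big_split /= sumrB -!big_distrr /= rsum.
  rewrite sum_ext_s; last first.
    by move=> p h; have [] := gsupp p q h.
  rewrite gcol phi_swap // -/p0 -/p1 -/k.
  rewrite (eq_sym p1) (eq_sym p0); ring.
rewrite /coupling_cost (eq_bigr _ (fun p _ => inner p)).
rewrite big_split big_split /= sumrN.
rewrite sum_ext_s; last first.
  move=> p h; apply: contraT => pns; move: h; rewrite big1_seq ?eqxx // => q /andP[_ qs].
  case: (eqVneq (g p q) 0) => [->|h]; first by rewrite mul0r.
  by have [] := gsupp p q h; rewrite (negPf pns).
rewrite -addrA lerD2l -rsum -sumrN -big_split /=.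
apply: ler_sum => p _.
have := d_tri p p0 p1; have := d_le1 p0 p1; have := r0 p; nra.
Qed.
End WS.

Section Final.
Variables (R : realType) (X : eqType) (d : X -> X -> R)
  (d_ge0 : forall x y, 0 <= d x y)
  (d_tri : forall x y z, d x z <= d x y + d y z)
  (d_le1 : forall x y, d x y <= 1).

Lemma inf_step (E E' : set R) e : 0 <= e ->
  (forall c, E c -> 0 <= c) -> (forall c, E' c -> 0 <= c) ->
  (forall c, E c -> exists2 c', E' c' & c' <= c + e) ->
  (forall c', E' c' -> exists c, E c) -> inf E' <= inf E + e.
Proof.
move=> e0 hE hE' fw bw.
case: (pselect (exists c, E c)) => [[c0 Ec0]|nE].
  have lbE' : has_lbound E' by exists 0 => c h; exact: hE' c h.
  rewrite -lerBlDr; apply: lb_le_inf; first by exists c0.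
  move=> c Ec; have [c' E'c' le] := fw c Ec.
  have := ge_inf lbE' E'c'; lra.
have eE : E = set0 by apply/seteqP; split => c // Ec; exfalso; apply: nE; exists c.
have eE' : E' = set0.
  by apply/seteqP; split => c // Ec; exfalso; have [c1 Ec1] := bw c Ec; apply: nE; exists c1.
by rewrite eE eE' inf0 add0r.
Qed.
Lemma cost_ge0 (mu nu : X -> R) s g : is_coupling mu nu s g -> 0 <= coupling_cost d s g.
Proof.
case=> _ g0 _ _ _; rewrite /coupling_cost.
by apply: sumr_ge0 => p _; apply: sumr_ge0 => q _; apply: mulr_ge0.
Qed.

Lemma W1_swap n (f : 'I_n -> X) (S : {set 'I_n}) x y (mu : X -> R) :
  x \in S -> y \notin S ->
  W1 d mu (phi n f (y |: (S :\ x))) <= W1 d mu (phi n f S) + #|S|%:R^-1.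
Proof.
move=> xS yS.
set S' := y |: (S :\ x).
have yS' : y \in S' by rewrite /S' setU11.
have xS' : x \notin S'.
  rewrite /S' !finset.inE eqxx /= orbF; apply/eqP => exy; move: yS; by rewrite -exy xS.
have eS : x |: (S' :\ y) = S.
  apply/setP => z; rewrite /S' !finset.inE.
  case: (eqVneq z x) => [->|zx] //=; case: (eqVneq z y) => [->|zy] //=.
  by rewrite (negPf yS).
apply: inf_step.
- by rewrite invr_ge0 ler0n.
- by move=> c [s [g [hc ->]]]; apply: cost_ge0 hc.
- by move=> c [s [g [hc ->]]]; apply: cost_ge0 hc.
- move=> c [s [g [hc ->]]].
  have [s' [g' [hc' le]]] := @W1_step_coupling R X d d_tri d_le1 _ f S x y mu s g xS yS hc.
  by exists (coupling_cost d s' g') => //; exists s', g'.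
- move=> c [s [g [hc _]]].
  have [s' [g' [hc' le]]] := @W1_step_coupling R X d d_tri d_le1 _ f S' y x mu s g yS' xS' hc.
  by rewrite eS in hc'; exists (coupling_cost d s' g'); exists s', g'.
Qed.

Lemma W1_BD n (f : 'I_n -> X) (mu : X -> R) k :
  BD (fun S => W1 d mu (phi n f S)) k [set: 'I_n] (k%:R^-1).
Proof.
move=> A x y hA _ _.
have cA : #|A| = k by move: hA; rewrite finset.inE => /andP[_ /eqP].
have helper : forall u v, u \in A -> v \notin A ->
    `|W1 d mu (phi n f A) - W1 d mu (phi n f (v |: (A :\ u)))| <= k%:R^-1.
  move=> u v uA vA.
  set A' := v |: (A :\ u).
  have vA' : v \in A' by rewrite /A' setU11.
  have uA' : u \notin A'.
    rewrite /A' !finset.inE eqxx /= orbF; apply/eqP => euv; move: vA; by rewrite -euv uA.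
  have eA : u |: (A' :\ v) = A.
    apply/setP => z; rewrite /A' !finset.inE.
    case: (eqVneq z u) => [->|zu] //=; case: (eqVneq z v) => [->|zv] //=.
    by rewrite (negPf vA).
  have cA' : #|A'| = k.
    rewrite /A' cardsU1 finset.inE (negPf vA) andbF add1n -cA (cardsD1 u A) uA.
    by [].
  have h1 := W1_swap n f A u v mu uA vA.
  have h2 := W1_swap n f A' v u mu vA' uA'.
  rewrite eA cA' in h2; rewrite cA in h1.
  rewrite ler_norml; apply/andP; split; rewrite -/A' in h1; lra.
case xA: (x \in A); case yA: (y \in A).
- by rewrite sw_same ?xA ?yA // subrr normr0 invr_ge0 ler0n.
- by rewrite sw_in_out ?xA ?yA //; apply: helper; rewrite ?xA ?yA.
- by rewrite swC sw_in_out ?xA ?yA //; apply: helper; rewrite ?xA ?yA.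
- by rewrite sw_same ?xA ?yA // subrr normr0 invr_ge0 ler0n.
Qed.
End Final.

Lemma card_sumP (R : realType) (I : finType) (P : {set I}) (Q : pred I) :
  (#|[set i in P | Q i]|%:R : R) = \sum_(i in P) (Q i)%:R.
Proof.
rewrite -sum1dep_card natr_sum [RHS]big_mkcond /=.
rewrite [LHS]big_mkcond /=; apply: eq_bigr => i _.
by case: (i \in P); case: (Q i).
Qed.

Theorem lemma2p4 (R : realType) (X : eqType) (d : X -> X -> R)
  (d_ge0 : forall x y, 0 <= d x y)
  (d_eq0 : forall x y, d x y = 0 <-> x = y)
  (d_sym : forall x y, d x y = d y x)
  (d_tri : forall x y z, d x z <= d x y + d y z)
  (d_le1 : forall x y, d x y <= 1)
  (n k : nat) (f : 'I_n -> X) (hk1 : (1 <= k)%N) (hkn : (k <= n)%N)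
  (t : R) (ht : 0 < t) :
  let Wf := fun S : {set 'I_n} => W1 d (phi n f [set: 'I_n]) (phi n f S) in
  let mu := unifE n k Wf in
  unifP n k (fun S => mu + t <= Wf S) <= expR (- (t ^+ 2 * k%:R / 4)).
Proof.
cbv zeta.
set Wf := (fun S : {set 'I_n} => W1 d (phi n f [set: 'I_n]) (phi n f S)).
set mu := unifE n k Wf.
set P := ksubsets n k.
have eP : P = sub k [set: 'I_n].
  by apply/setP => S; rewrite !finset.inE finset.subsetT.
have emu : mu = avg P Wf by [].
have hBD : BD Wf k [set: 'I_n] (k%:R^-1) := @W1_BD R X d d_ge0 d_tri d_le1 n f _ k.
have kn : (k <= #|[set: 'I_n]|)%N by rewrite cardsT card_ord.
have k0 : 0 < k%:R :> R by rewrite ltr0n.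
have hQ : unifP (R:=R) n k (fun S => mu + t <= Wf S) = avg P (fun S => ((mu + t <= Wf S)%R : nat)%:R).
  by rewrite /unifP /avg -/P card_sumP.
rewrite hQ.
case: (lerP t 1) => t1.
  set lam := k%:R * t / 2.
  have l0 : 0 <= lam by rewrite /lam; apply: divr_ge0 => //; apply: mulr_ge0; rewrite ?ler0n ?ltW.
  have lc : lam * k%:R^-1 <= 1/2.
    have -> : lam * k%:R^-1 = t / 2 by rewrite /lam; field; rewrite lt0r_neq0.
    lra.
  have c0 : 0 <= k%:R^-1 :> R by rewrite invr_ge0 ltW.
  have [_ hexp] := @conc R _ k [set: 'I_n] Wf (k%:R^-1) lam kn c0 l0 lc hBD.
  rewrite -eP -emu in hexp.
  apply: le_trans (avg_le P _ (fun S => expR (lam * (Wf S - mu)) * expR (- (lam * t))) _) _.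
    move=> S _; case: (mu + t <= Wf S) / boolP => h /=.
      rewrite -expRD; apply: le_trans (expR_ge1Dx _); rewrite lerDl.
      have -> : lam * (Wf S - mu) + - (lam * t) = lam * (Wf S - mu - t) by ring.
      by apply: mulr_ge0 => //; lra.
    by apply: mulr_ge0; apply: expR_ge0.
  rewrite avgZr; apply: le_trans (ler_wpM2r (expR_ge0 _) hexp) _.
  rewrite -expRD ler_expR le_eqVlt; apply/orP; left; apply/eqP.
  by rewrite /lam; field; rewrite lt0r_neq0.
have c0 : 0 <= k%:R^-1 :> R by rewrite invr_ge0 ltW.
have lc0 : 0 * k%:R^-1 <= 1/2 :> R by rewrite mul0r; lra.
have [h1 _] := @conc R _ k [set: 'I_n] Wf (k%:R^-1) 0 kn c0 (lexx 0) lc0 hBD.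
rewrite -eP -emu in h1.
have -> : avg P (fun S => ((mu + t <= Wf S)%R : nat)%:R) = 0 :> R.
  rewrite /avg big1 ?mul0r // => S SP.
  have := h1 S SP; rewrite mulfV ?lt0r_neq0 //.
  by case: (mu + t <= Wf S) / boolP => h //=; lra.
exact: expR_ge0.
Qed.
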